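(* For every $K>0$ there is a constant $C_1>0$ such that for every finite set $A\subset\mathbb{R}$ with $|A(A+A+A+A)|\le K|A|^2$, we have $|A+A|\le C_1|A|^{3/2}$.
   Context: $A+A=\{a+b:a,b\in A\}$ and $A(A+A+A+A)=\{a(b+c+d+e):a,b,c,d,e\in A\}$. *)

(* Defs.v *)
From HB Require Import structures.
From mathcomp Require Import all_boot all_order all_algebra.
From mathcomp Require Import finmap.
From mathcomp Require Import all_classical all_reals all_analysis.
Set Implicit Arguments. Unset Strict Implicit. Unset Printing Implicit Defensive.
Import Order.TTheory GRing.Theory Num.Theory.
Local Open Scope ring_scope.
Local Open Scope fset_scope.

Definition sumset {R : realType} (A : {fset R}) : {fset R} :=
  [fset (a + b)%R | a : R in A, b : R in A].

Definition prod_sum4 {R : realType} (A : {fset R}) : {fset R} :=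
  [fset (a * s)%R | a : R in A, s : R in sumset (sumset A)].

(* Main.v *)
Require Import Defs.
From HB Require Import structures.
From mathcomp Require Import all_boot all_order all_algebra.
From mathcomp Require Import finmap.
From mathcomp Require Import all_classical all_reals all_analysis.
From mathcomp Require Import ring lra.
Import Order.TTheory GRing.Theory Num.Theory.
Local Open Scope ring_scope.
Local Open Scope fset_scope.
Local Close Scope fset_scope.

Lemma card_sumset_le (R : realType) (A : {fset R}) : (#|` sumset A| <= #|` A| * #|` A|)%N.
Proof.
rewrite /sumset unlock size_seq_fset.
by apply: leq_trans (size_undup _) _; rewrite size_allpairs.
Qed.

Lemma foldr_min_in (R : realType) (x0 : R) (s : seq R) :
  foldr Num.min x0 s \in x0 :: s.
Proof.
elim: s => [|y s IH] /=; first by rewrite mem_seq1.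
rewrite /Num.min; case: ifP => _; first by rewrite !inE eqxx orbT.
move: IH; rewrite !inE => /orP[->|->] //; by rewrite !orbT.
Qed.

Lemma foldr_min_le (R : realType) (x0 : R) (s : seq R) x :
  x \in s -> foldr Num.min x0 s <= x.
Proof.
elim: s => [|y s IH] //=; rewrite inE => /orP[/eqP->|xs].
  by rewrite ge_min lexx.
by rewrite ge_min (IH xs) orbT.
Qed.

Definition nextr {R : realType} (Q : seq R) (r : R) : R :=
  foldr Num.min (head 0 [seq x <- Q | r < x]) [seq x <- Q | r < x].

Lemma nextr_spec (R : realType) (Q : seq R) r : has (fun x => r < x) Q ->
  [/\ nextr Q r \in Q, r < nextr Q r &
      forall x, x \in Q -> r < x -> nextr Q r <= x].
Proof.
move=> hQ; set L := [seq x <- Q | r < x].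
have hL : nextr Q r \in L.
  have := @foldr_min_in _ (head 0 L) L; rewrite /nextr -/L inE => /orP[/eqP->|//].
  by move: hQ; rewrite has_filter -/L; case: (L) => //= y s _; rewrite inE eqxx.
move: (hL); rewrite mem_filter => /andP[h1 h2]; split => // x xQ rx.
by rewrite /nextr -/L; apply: foldr_min_le; rewrite mem_filter rx.
Qed.

Definition uu {R : realType} (B : seq R) (s : R) : R :=
  head 0 [seq u <- B | s * u \in B].

Lemma uu_spec (R : realType) (B : seq R) s u : u \in B -> s * u \in B ->
  uu B s \in B /\ s * uu B s \in B.
Proof.
move=> uB suB; have : uu B s \in [seq u <- B | s * u \in B].
  have : [seq u <- B | s * u \in B] != [::].
    by rewrite -has_filter; apply/hasP; exists u.
  by rewrite /uu; case: [seq _ <- _ | _] => //= y l _; rewrite inE eqxx.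
by rewrite mem_filter => /andP[].
Qed.

Lemma mediant (R : realType) (s t u sg : R) : 0 < s -> 0 < u -> t / s < sg ->
  t / s < (t + sg * u) / (s + u) /\ (t + sg * u) / (s + u) < sg.
Proof.
move=> s0 u0 lt; have su0 : 0 < s + u by rewrite addr_gt0.
have Ht : t = t / s * s by rewrite divfK // gt_eqF.
set r := t / s in lt Ht *.
rewrite ltr_pdivlMr // ltr_pdivrMr //; split; rewrite {1}Ht; nra.
Qed.

Lemma key (R : realType) (A B P : {fset R}) :
  (forall a, a \in A -> 0 < a) -> (forall b, b \in B -> 0 < b) ->
  (forall a b c, a \in A -> b \in B -> c \in B -> a * (b + c) \in P) ->
  (#|`A| * (#|`B| * #|`B|) <= #|`P| * #|`P| + #|`A| * #|`B|)%N.
Proof.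
move=> hA hB hP.
set eB := enum_fset B; set eA := enum_fset A; set eP := enum_fset P.
set BB := [seq (x, y) | x <- eB, y <- eB].
set Q := [seq p.2 / p.1 | p <- BB].
pose good (p : R * R) := has (fun x => p.2 / p.1 < x) Q.
set G := [seq p <- BB | good p].
set D := [seq (a, p) | a <- eA, p <- G].
pose phi (x : R * (R * R)) := let sg := nextr Q (x.2.2 / x.2.1) in
  let u := uu eB sg in (x.1 * (x.2.1 + u), x.1 * (x.2.2 + sg * u)).
have uB : uniq eB := fset_uniq B.
have uA : uniq eA := fset_uniq A.
have uBB : uniq BB by apply: allpairs_uniq => // -[? ?] [? ?].
have uG : uniq G := filter_uniq _ uBB.
have uD : uniq D by apply: allpairs_uniq => // -[? ?] [? ?].
have memBB p : p \in BB -> p.1 \in B /\ p.2 \in B.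
  by case/allpairsP => -[x y] [hx hy ->].
have Qfact x : x \in Q -> (0 < x) /\ exists2 u, u \in B & x * u \in B.
  case/mapP => p /memBB [h1 h2] ->; split; first by rewrite divr_gt0 ?hB.
  by exists p.1 => //; rewrite divfK // gt_eqF ?hB.
have Gfact p : p \in G -> [/\ p.1 \in B, p.2 \in B, p.2 / p.1 \in Q & good p].
  rewrite mem_filter => /andP[gp pBB]; have [h1 h2] := memBB p pBB.
  by split => //; apply: map_f.
have uuf p : p \in G -> let sg := nextr Q (p.2 / p.1) in
   [/\ sg \in Q, p.2/p.1 < sg, (forall x, x \in Q -> p.2/p.1 < x -> sg <= x),
       uu eB sg \in B & sg * uu eB sg \in B].
  move=> /Gfact [_ _ _ gp] /=; have [h1 h2 h3] := @nextr_spec _ _ _ gp.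
  have [_ [u u1 u2]] := Qfact _ h1.
  by have [? ?] := @uu_spec _ _ _ _ u1 u2; split.
have phi_inj : {in D &, injective phi}.
  move=> [a [s t]] [a' [s' t']] /allpairsP [[x1 x2] [/= ha hg [Ea Ep]]].
  move=> /allpairsP [[y1 y2] [/= ha' hg' [Ea' Ep']]].
  rewrite -Ea in ha; rewrite -Ep in hg; rewrite -Ea' in ha'; rewrite -Ep' in hg'.
  rewrite /phi /=; move=> [E1 E2].
  have [sB tB _ _] := Gfact _ hg; have [sB' tB' rQ' _] := Gfact _ hg'.
  have [_ _ rQ _] := Gfact _ hg.
  have [sgQ rsg sgmin uB1 suB] := uuf _ hg; have [sgQ' rsg' sgmin' uB1' suB'] := uuf _ hg'.
  move: sgQ rsg sgmin uB1 suB sgQ' rsg' sgmin' uB1' suB' rQ rQ' E1 E2 => /=.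
  set r := t / s; set r' := t' / s'.
  set sg := nextr Q r; set sg' := nextr Q r'; set u := uu eB sg; set u' := uu eB sg'.
  move=> sgQ rsg sgmin uB1 suB sgQ' rsg' sgmin' uB1' suB' rQ rQ' E1 E2.
  have a0 := hA _ ha; have a0' := hA _ ha'.
  have s0 := hB _ sB; have s0' := hB _ sB'; have u0 := hB _ uB1; have u0' := hB _ uB1'.
  rewrite /= in s0 s0'.
  have [m1 m2] := @mediant _ _ _ _ _ s0 u0 rsg.
  have [m1' m2'] := @mediant _ _ _ _ _ s0' u0' rsg'.
  have Hw : (t + sg * u) / (s + u) = (t' + sg' * u') / (s' + u').
    have -> : (t + sg * u) / (s + u) = (a * (t + sg * u)) / (a * (s + u)).
      by rewrite -mulf_div divff ?mul1r // gt_eqF.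
    have -> : (t' + sg' * u') / (s' + u') = (a' * (t' + sg' * u')) / (a' * (s' + u')).
      by rewrite -mulf_div divff ?mul1r // gt_eqF.
    by rewrite E1 E2.
  have rr : r = r'.
    apply/eqP; rewrite eq_le !leNgt; apply/andP; split; apply/negP => lt.
      have h := lt_trans (lt_le_trans m2' (sgmin' _ rQ lt)) m1.
      by rewrite Hw ltxx in h.
    have h := lt_trans (lt_le_trans m2 (sgmin _ rQ' lt)) m1'.
    by rewrite Hw ltxx in h.
  have sgE : sg' = sg by rewrite /sg' -rr.
  have uE : u' = u by rewrite /u' sgE.
  rewrite sgE uE in E1 E2.
  have Ht : t = r * s by rewrite /r divfK // gt_eqF.
  have Ht' : t' = r * s' by rewrite rr /r' divfK // gt_eqF.
  have H0 : (sg - r) * u * (a - a') = 0.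
    have -> : (sg - r) * u * (a - a') = (a * (t + sg * u) - a' * (t' + sg * u))
       - r * (a * (s + u) - a' * (s' + u)) by rewrite Ht Ht'; ring.
    by rewrite E1 E2 !subrr mulr0 subrr.
  have aa : a = a'.
    by move/eqP: H0; rewrite !mulf_eq0 !subr_eq0 (gt_eqF u0) (gt_eqF rsg) /= => /eqP.
  rewrite -aa in E1; have ss : s = s'.
    by move/(mulfI (negbT (gt_eqF a0)))/addIr: E1.
  by rewrite aa ss Ht Ht' ss.
have sub : {subset map phi D <= [seq (x, y) | x <- eP, y <- eP]}.
  move=> z /mapP [[a [s t]] /allpairsP [[x1 x2] [/= ha hg [Ea Ep]]] ->].
  rewrite -Ea in ha; rewrite -Ep in hg.
  have [sB tB _ _] := Gfact _ hg; have [_ _ _ uB1 suB] := uuf _ hg.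
  by rewrite /phi /=; apply: allpairs_f; apply: hP.
have szD : (size D <= #|`P| * #|`P|)%N.
  rewrite -(size_map phi) -(size_allpairs pair eP eP); apply: uniq_leq_size => //.
  by rewrite map_inj_in_uniq.
have hc := count_predC good BB; rewrite -!size_filter in hc.
set Bd := [seq x <- BB | predC good x] in hc.
have szBd : (size Bd <= #|`B|)%N.
  rewrite -(size_map fst); apply: uniq_leq_size.
    rewrite map_inj_in_uniq ?filter_uniq //.
    move=> [s t] [s' t'] hp hq /= ss; rewrite -ss in hq *.
    move: hp hq; rewrite !mem_filter /= => /andP[/hasPn np pB] /andP[/hasPn nq qB].
    have [sB tB] := memBB _ pB; have [_ tB'] := memBB _ qB.
    have rQ : t / s \in Q by apply: (map_f _ pB).
    have rQ' : t' / s \in Q by apply: (map_f _ qB).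
    have rr : t / s = t' / s.
      by apply/eqP; rewrite eq_le !leNgt (np _ rQ') (nq _ rQ).
    have s0 := hB _ sB.
    by rewrite -(divfK (negbT (gt_eqF s0)) t) rr divfK // gt_eqF.
  by move=> x /mapP [p]; rewrite mem_filter => /andP[_ /memBB[]] + _ ->.
have szG : size D = (#|`A| * size G)%N by rewrite size_allpairs.
move: hc; rewrite size_allpairs -/eB => hc.
rewrite -hc mulnDr; apply: leq_add; first by rewrite -szG.
exact: leq_mul.
Qed.

Lemma ybound (R : realType) (K n x y N : R) : 0 < K -> 2 <= n -> n - 1 <= x ->
  0 <= N -> N <= K * n ^+ 2 -> x * y ^+ 2 <= 2 * N ^+ 2 + x * y ->
  y ^+ 2 <= 8 * K ^+ 2 * n ^+ 3 + 1.
Proof.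
move=> K0 n2 hx N0 hN hy.
have x0 : 0 < x by lra.
have a : N ^+ 2 <= K ^+ 2 * n ^+ 4.
  have : N ^+ 2 <= (K * n ^+ 2) ^+ 2 by rewrite ler_sqr ?nnegrE //; nra.
  by rewrite exprMn -exprM.
have b : 2 * (K ^+ 2 * n ^+ 4) <= 4 * K ^+ 2 * n ^+ 3 * x.
  have : n <= 2 * x by lra.
  have : 0 <= K ^+ 2 * n ^+ 3 by apply: mulr_ge0; [apply: sqr_ge0 | apply: exprn_ge0; lra].
  rewrite (_ : n ^+ 4 = n ^+ 3 * n); last by rewrite exprSr.
  nra.
have c : y ^+ 2 - y <= 4 * K ^+ 2 * n ^+ 3.
  rewrite -(ler_pM2l x0); nra.
have := sqr_ge0 (y - 1); nra.
Qed.

Lemma mbound (R : realType) (K n x y1 y2 m N : R) : 0 < K -> 0 <= n -> 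
  (n <= 1 \/ 2 <= n) -> n - 1 <= x -> 0 <= m -> 0 <= y1 -> 0 <= y2 ->
  0 <= N -> N <= K * n ^+ 2 ->
  x * y1 ^+ 2 <= 2 * N ^+ 2 + x * y1 -> x * y2 ^+ 2 <= 2 * N ^+ 2 + x * y2 ->
  m <= y1 + y2 + 1 -> m <= n ^+ 2 ->
  m ^+ 2 <= (48 * K ^+ 2 + 9) * n ^+ 3.
Proof.
move=> K0 n0 [n1|n2] hx m0 y10 y20 N0 hN h1 h2 hm hmn.
  have : m ^+ 2 <= n ^+ 4.
    have := ler_sqr; move=> _; rewrite (_ : n ^+ 4 = (n ^+ 2) ^+ 2); last by rewrite -exprM.
    by rewrite ler_sqr ?nnegrE ?exprn_ge0.
  have : n ^+ 4 <= n ^+ 3 by rewrite exprSr; have := exprn_ge0 3 n0; nra.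
  have : 0 <= K ^+ 2 * n ^+ 3 by apply: mulr_ge0; [apply: sqr_ge0 | apply: exprn_ge0].
  nra.
have e1 := @ybound _ _ _ _ _ _ K0 n2 hx N0 hN h1.
have e2 := @ybound _ _ _ _ _ _ K0 n2 hx N0 hN h2.
have : m ^+ 2 <= (y1 + y2 + 1) ^+ 2 by rewrite ler_sqr ?nnegrE //; lra.
have : 1 <= n ^+ 3 by apply: exprn_ege1; lra. 
have : 0 <= K ^+ 2 * n ^+ 3 by apply: mulr_ge0; [apply: sqr_ge0 | apply: exprn_ge0; lra].
have := sqr_ge0 (y1 - y2); have := sqr_ge0 (y1 - 1); have := sqr_ge0 (y2 - 1).
nra.
Qed.


Lemma powR32 (R : realType) (n : R) : 0 <= n -> (powR n (3 / 2)) ^+ 2 = n ^+ 3.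
Proof.
move=> n0; rewrite -powR_mulrn ?powR_ge0 // -powRrM.
by rewrite (_ : (3 / 2 * 2%:R : R) = 3%:R) ?powR_mulrn // divfK // pnatr_eq0.
Qed.

Local Open Scope fset_scope.

Theorem theorem3p4 (R : realType) (K : R) : 0 < K ->
  exists C1 : R, 0 < C1 /\
    forall A : {fset R},
      (#|` prod_sum4 A|%:R <= K * (#|` A|%:R) ^+ 2) ->
      #|` sumset A|%:R <= C1 * powR (#|` A|%:R) (3 / 2).
Proof.
move=> K0; exists (48 * K ^+ 2 + 9)%R; split; first by have := sqr_ge0 K; lra.
move=> A hA.
set S := sumset A; set P := prod_sum4 A.
have hPS a b c : a \in A -> b \in S -> c \in S -> (a * (b + c))%R \in P.
  move=> ha hb hc; apply/imfset2P; exists a => //; exists (b + c)%R => //.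
  by apply/imfset2P; exists b => //; exists c.
pose Ap := [fset x in A | (0 < x)%R]; pose Am := [fset x in A | (x < 0)%R].
pose An := [fset (- x)%R | x in Am].
pose Sp := [fset x in S | (0 < x)%R]; pose Sm := [fset x in S | (x < 0)%R].
pose Sn := [fset (- x)%R | x in Sm].
pose Pn := [fset (- x)%R | x in P].
have memP (X : {fset R}) x : x \in [fset y in X | (0 < y)%R] -> x \in X /\ (0 < x)%R.
  by rewrite !inE => /andP.
have memN (X : {fset R}) x : x \in [fset (- y)%R | y in [fset y in X | (y < 0)%R]] ->
    (- x)%R \in X /\ (0 < x)%R.
  by case/imfsetP => y; rewrite !inE => /andP[yX y0] ->; rewrite opprK oppr_gt0.
have cN (X : {fset R}) : #|` [fset (- y)%R | y in X]| = #|` X|.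
  by rewrite card_imfset //=; exact: oppr_inj.
have cover (X : {fset R}) : (#|` X| <= #|` [fset y in X | (0 < y)%R]| + #|` [fset y in X | (y < 0)%R]| + 1)%N.
  rewrite -(cardfs1 (0%R : R)).
  set Xp := [fset y in X | (0 < y)%R]; set Xm := [fset y in X | (y < 0)%R].
  apply: (@leq_trans #|` (Xp `|` Xm) `|` [fset 0%R]|).
    apply: fsubset_leq_card; apply/fsubsetP => x xX; rewrite !inE xX /=.
    by case: (ltgtP x 0%R) => //= ->; rewrite eqxx !orbT.
  apply: leq_trans (leq_card_fsetU _ _).1 _; rewrite leq_add2r.
  exact: (leq_card_fsetU _ _).1.
have k1 := @key _ Ap Sp P (fun a h => (memP _ _ h).2) (fun a h => (memP _ _ h).2)
  (fun a b c ha hb hc => hPS _ _ _ (memP _ _ ha).1 (memP _ _ hb).1 (memP _ _ hc).1).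
have k2 : (#|` An| * (#|` Sp| * #|` Sp|) <= #|` Pn| * #|` Pn| + #|` An| * #|` Sp|)%N.
  apply: key => [a /memN[]|b /memP[]|a b c /memN[ha _] /memP[hb _] /memP[hc _]] //.
  apply/imfsetP; exists (- a * (b + c))%R; first exact: hPS.
  by rewrite mulNr opprK.
have k3 : (#|` Ap| * (#|` Sn| * #|` Sn|) <= #|` Pn| * #|` Pn| + #|` Ap| * #|` Sn|)%N.
  apply: key => [a /memP[]|b /memN[]|a b c /memP[ha _] /memN[hb _] /memN[hc _]] //.
  apply/imfsetP; exists (a * (- b + - c))%R; first exact: hPS.
  by rewrite -opprD mulrN opprK.
have k4 : (#|` An| * (#|` Sn| * #|` Sn|) <= #|` P| * #|` P| + #|` An| * #|` Sn|)%N.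
  apply: key => [a /memN[]|b /memN[]|a b c /memN[ha _] /memN[hb _] /memN[hc _]] //.
  by rewrite (_ : (a * (b + c) = - a * (- b + - c))%R) ?hPS // -opprD mulrNN.
rewrite !cN in k2 k3 k4.
have k1R := k1; have k2R := k2; have k3R := k3; have k4R := k4.
move: k1R k2R k3R k4R; rewrite -!(ler_nat R) !natrD !natrM => k1R k2R k3R k4R.
have cA : (#|`A| <= #|`Ap| + #|`Am| + 1)%N := cover A.
have cS : (#|`S| <= #|`Sp| + #|`Sm| + 1)%N := cover S.
move: cA cS; rewrite -!(ler_nat R) !natrD => cA cS.
have cSA := @card_sumset_le _ A; move: cSA; rewrite -(ler_nat R) natrM -expr2 => cSA.
have hn : ((#|` A|%:R : R) <= 1 \/ 2 <= (#|` A|%:R : R))%R.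
  by case: (leqP #|` A| 1) => h; [left | right]; rewrite ?(ler_nat R _ 1) ?(ler_nat R 2) //.
have hm2 := @mbound R K #|` A|%:R (#|` Ap| + #|` Am|)%:R #|` Sp|%:R #|` Sm|%:R
  #|` S|%:R #|` P|%:R K0 (ler0n _ _) hn.
have hm2' : (#|` S|%:R ^+ 2 <= (48 * K ^+ 2 + 9) * #|` A|%:R ^+ 3 :> R)%R.
  by apply: hm2; rewrite ?natrD ?ler0n //; lra.
rewrite -ler_sqr ?nnegrE ?mulr_ge0 ?powR_ge0 ?ler0n //; last by have := sqr_ge0 K; lra.
rewrite exprMn powR32 ?ler0n //.
apply: le_trans hm2' _.
set D := (48 * K ^+ 2 + 9)%R.
have D1 : (1 <= D)%R by have := sqr_ge0 K; rewrite /D; lra.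
apply: ler_wpM2r; first by apply: exprn_ge0; rewrite ler0n.
rewrite expr2; nra.
Qed.
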